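(* Let $\mathcal X\subset\mathbb R^d$ be finite, let $d$ denote Euclidean distance, and let $C=\{C_1,\dots,C_k\}$ be a center-based clustering of $\mathcal X$ whose centers $\mu_1,\dots,\mu_k$ are the centers of mass of the clusters, $\mu_i=\frac1{|C_i|}\sum_{x\in C_i}x$. Assume $C$ satisfies the $\gamma$-margin property. Fix $i\in[k]$ and $\epsilon\ge 0$, and let $\mu_i'\in\mathbb R^d$ be any point with $d(\mu_i,\mu_i')\le r(C_i)\,\epsilon$, where $r(C_i)=\max_{x\in C_i}d(x,\mu_i)$. If $\gamma\ge 1+2\epsilon$, then for all $x\in C_i$ and all $y\in\mathcal X\setminus C_i$ we have $d(x,\mu_i')<d(y,\mu_i')$.
   Context: A clustering $C=\{C_1,\dots,C_k\}$ of $\mathcal X$ is center-based with centers $\mu_1,\dots,\mu_k$ if for every $x\in\mathcal X$ and $i\le k$: $x\in C_i \iff i=\arg\min_j d(x,\mu_j)$. Such a clustering satisfies the $\gamma$-margin property if for all $i\in[k]$, every $x\in C_i$ and every $y\in\mathcal X\setminus C_i$: $\gamma\, d(x,\mu_i)<d(y,\mu_i)$. *)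

(* Defs.v *)
From HB Require Import structures.
From mathcomp Require Import all_boot all_order all_algebra.
From mathcomp Require Import reals.
Set Implicit Arguments. Unset Strict Implicit. Unset Printing Implicit Defensive.
Import Order.TTheory GRing.Theory Num.Theory.
Local Open Scope ring_scope.

Section Defs.
Variables (R : realType) (d : nat).
Notation pt := 'rV[R]_d.

Definition edist (x y : pt) : R := Num.sqrt (\sum_(j < d) (x 0 j - y 0 j) ^+ 2).

(* center of mass of a finite cluster given as a duplicate-free sequence *)
Definition center_of_mass (S : seq pt) : pt := (size S)%:R^-1 *: \sum_(x <- S) x.

Definition cradius (S : seq pt) (mu : pt) : R := \big[Num.max/0]_(x <- S) edist x mu.

Definition is_clustering (k : nat) (X : seq pt) (C : 'I_k -> seq pt) : Prop :=
  [/\ forall i, uniq (C i),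
      forall i, (0 < size (C i))%N,
      forall i x, x \in C i -> x \in X,
      forall x, x \in X -> exists i, x \in C i
    & forall i j x, x \in C i -> x \in C j -> i = j].

Definition center_based (k : nat) (X : seq pt) (C : 'I_k -> seq pt) (mu : 'I_k -> pt) : Prop :=
  forall x, x \in X -> forall i,
    x \in C i <-> (forall j, j != i -> edist x (mu i) < edist x (mu j)).

Definition gamma_margin (k : nat) (X : seq pt) (C : 'I_k -> seq pt) (mu : 'I_k -> pt)
  (gamma : R) : Prop :=
  forall i x y, x \in C i -> y \in X -> y \notin C i ->
    gamma * edist x (mu i) < edist y (mu i).
End Defs.

(* Main.v *)
Require Import Defs.
From HB Require Import structures.
From mathcomp Require Import all_boot all_order all_algebra.
From mathcomp Require Import reals.
From mathcomp Require Import ring lra.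
Import Order.TTheory GRing.Theory Num.Theory.
Local Open Scope ring_scope.

Section Aux.
Variables (R : realType) (d : nat).

Lemma sum_sq0 (a : 'I_d -> R) : \sum_j a j ^+ 2 = 0 -> forall j, a j = 0.
Proof.
move=> H j; have := psumr_eq0P (P := predT) (F := fun j => a j ^+ 2) _ H.
move=> /(_ (fun i _ => sqr_ge0 (a i)) j isT) /eqP.
by rewrite sqrf_eq0 => /eqP.
Qed.

Lemma cs (a b : 'I_d -> R) :
  \sum_j a j * b j <= Num.sqrt (\sum_j a j ^+ 2) * Num.sqrt (\sum_j b j ^+ 2).
Proof.
set A := Num.sqrt _; set B := Num.sqrt _.
have SA : 0 <= \sum_j a j ^+ 2 by apply: sumr_ge0 => j _; exact: sqr_ge0.
have SB : 0 <= \sum_j b j ^+ 2 by apply: sumr_ge0 => j _; exact: sqr_ge0.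
have A2 : A ^+ 2 = \sum_j a j ^+ 2 by rewrite sqr_sqrtr.
have B2 : B ^+ 2 = \sum_j b j ^+ 2 by rewrite sqr_sqrtr.
have A0 : 0 <= A by apply: sqrtr_ge0.
have B0 : 0 <= B by apply: sqrtr_ge0.
have key : 0 <= \sum_j (B * a j - A * b j) ^+ 2
  by apply: sumr_ge0 => j _; exact: sqr_ge0.
have E : \sum_j (B * a j - A * b j) ^+ 2 =
   B ^+ 2 * (\sum_j a j ^+ 2) - 2 * A * B * (\sum_j a j * b j) + A ^+ 2 * (\sum_j b j ^+ 2).
  rewrite !mulr_sumr -sumrB -big_split /=; apply: eq_bigr => j _; ring.
rewrite E -A2 -B2 in key.
have [AB0|ABpos] := eqVneq (A * B) 0.
  move/eqP: AB0; rewrite mulf_eq0 => /orP [/eqP HA|/eqP HB].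
  - have z : forall j, a j = 0 by apply: sum_sq0; rewrite -A2 HA expr0n.
    by rewrite HA mul0r big1 // => j _; rewrite z mul0r.
  - have z : forall j, b j = 0 by apply: sum_sq0; rewrite -B2 HB expr0n.
    by rewrite HB mulr0 big1 // => j _; rewrite z mulr0.
have ABp : 0 < A * B by rewrite lt_neqAle eq_sym ABpos mulr_ge0.
set S := \sum_j a j * b j in key *.
have : 0 <= 2 * (A * B) * (A * B - S).
  by have -> : 2 * (A * B) * (A * B - S) = B ^+ 2 * A ^+ 2 - 2 * A * B * S + A ^+ 2 * B ^+ 2 by ring.
rewrite pmulr_rge0 ?subr_ge0 // mulr_gt0 //.
Qed.

Lemma edist_triangle (x y z : 'rV[R]_d) : edist x z <= edist x y + edist y z.
Proof.
rewrite /edist.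
set a := fun j => x 0 j - y 0 j; set b := fun j => y 0 j - z 0 j.
have -> : \sum_(j < d) (x 0 j - z 0 j) ^+ 2 = \sum_j (a j + b j) ^+ 2
  by apply: eq_bigr => j _; rewrite /a /b; congr (_ ^+ 2); ring.
rewrite -/(\sum_j a j ^+ 2) -/(\sum_j b j ^+ 2).
have SA : 0 <= \sum_j a j ^+ 2 by apply: sumr_ge0 => j _; exact: sqr_ge0.
have SB : 0 <= \sum_j b j ^+ 2 by apply: sumr_ge0 => j _; exact: sqr_ge0.
have P : 0 <= Num.sqrt (\sum_j a j ^+ 2) + Num.sqrt (\sum_j b j ^+ 2)
  by rewrite addr_ge0 ?sqrtr_ge0.
rewrite -(ger0_norm P) -sqrtr_sqr ler_wsqrtr //.
have E : \sum_j (a j + b j) ^+ 2 = \sum_j a j ^+ 2 + 2 * \sum_j a j * b j + \sum_j b j ^+ 2.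
  rewrite mulr_sumr -!big_split /=; apply: eq_bigr => j _; ring.
rewrite E sqrrD !sqr_sqrtr // lerD2r lerD2l.
have := cs a b; lra.
Qed.

Lemma edistC (x y : 'rV[R]_d) : edist x y = edist y x.
Proof. by rewrite /edist; congr Num.sqrt; apply: eq_bigr => j _; rewrite -sqrrN opprB. Qed.

Lemma edist_ge0 (x y : 'rV[R]_d) : 0 <= edist x y.
Proof. exact: sqrtr_ge0. Qed.
End Aux.

Lemma le_bigmax_seq (R : realType) (T : eqType) (S : seq T) (f : T -> R) x :
  x \in S -> f x <= \big[Num.max/0]_(y <- S) f y.
Proof.
elim: S => [//|z S IH]; rewrite in_cons big_cons => /orP [/eqP ->|H].
  by rewrite le_max lexx.
by rewrite le_max IH ?orbT.
Qed.

Lemma bigmax_lt (R : realType) (T : eqType) (S : seq T) (f : T -> R) (g D : R) :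
  0 <= g -> 0 < D -> (forall x, x \in S -> g * f x < D) ->
  g * \big[Num.max/0]_(y <- S) f y < D.
Proof.
move=> g0 D0; elim: S => [|z S IH] H; first by rewrite big_nil mulr0.
rewrite big_cons; case: (leP (f z) (\big[Num.max/0]_(y <- S) f y)) => _.
  by apply: IH => x xS; apply: H; rewrite in_cons xS orbT.
by apply: H; rewrite in_cons eqxx.
Qed.

Theorem lemma1 (R : realType) (d k : nat) (X : seq 'rV[R]_d)
  (C : 'I_k -> seq 'rV[R]_d) (mu : 'I_k -> 'rV[R]_d) (gamma : R) :
  is_clustering X C ->
  (forall i, mu i = center_of_mass (C i)) ->
  center_based X C mu ->
  gamma_margin X C mu gamma ->
  forall (i : 'I_k) (eps : R) (mu' : 'rV[R]_d),
    0 <= eps ->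
    edist (mu i) mu' <= cradius (C i) (mu i) * eps ->
    1 + 2 * eps <= gamma ->
    forall x y, x \in C i -> y \in X -> y \notin C i ->
      edist x mu' < edist y mu'.
Proof.
move=> _ _ _ Hm i eps mu' e0 Hd Hg x y xC yX yC.
set r := cradius (C i) (mu i).
have ar : edist x (mu i) <= r
  by rewrite /r /cradius; exact: (le_bigmax_seq _ _ _ (fun z => edist z (mu i)) _ xC).
have r0 : 0 <= r by apply: le_trans ar; apply: sqrtr_ge0.
have hx := Hm i x y xC yX yC.
have a0 := edist_ge0 _ _ x (mu i).
have bpos : 0 < edist y (mu i).
  apply: le_lt_trans hx; apply: mulr_ge0 => //; lra.
have br : gamma * r < edist y (mu i).
  apply: bigmax_lt => //; first lra.
  by move=> z zC; apply: Hm.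
have t1 := edist_triangle _ _ x (mu i) mu'.
have t2 := edist_triangle _ _ y mu' (mu i).
rewrite (edistC _ _ mu' (mu i)) in t2.
have p : 0 <= (gamma - 1 - 2 * eps) * r by apply: mulr_ge0 => //; lra.
have E : (gamma - 1 - 2 * eps) * r = gamma * r - r - 2 * (r * eps) by ring.
rewrite E in p.
rewrite -/r in Hd.
lra.
Qed.
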